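(* For all sufficiently large $n$, the modified multi-phase process described in the context returns an element of $S^-_{3/4}$ with probability at least $1-2^{-n/5}$.
   Context: Let $n\ge2$ be an integer such that $m=n/\log_2 n$ is an integer, and let $S'$ be a set of $m$ distinct elements of a totally ordered set. For $\rho\in(0,1]$, $S^-_\rho$ denotes the set of the $\lceil \rho m\rceil$ smallest elements of $S'$ and $S^+_\rho=S'\setminus S^-_\rho$. There are two oracles $\mathcal{O}_1,\mathcal{O}_2$ which can be queried with an element $x\in S'$ and answer ''relevant'' or ''not relevant'' in constant time, all answers being mutually independent; for constants $p_1,p_2\in[0,\tfrac12)$: $\mathcal{O}_1$ reports $x$ relevant with probability at least $1-p_1$ if $x\in S^-_{1/6}$ and at most $p_1$ if $x\in S^+_{1/3}$; $\mathcal{O}_2$ reports $x$ relevant with probability at least $1-p_2$ if $x\in S^-_{1/3}$ and at most $p_2$ if $x\in S^+_{3/4}$. For $q\in[0,\tfrac12)$ let $c_q=\lceil 4(1-q)/(1-2q)^2\rceil$. Let $\eta = 1+\lceil \log_2 \frac{n}{\log_2 n}\rceil$. Modified multi-phase process: the elements of $S'$ are considered one at a time. For the current element $x$, a preliminary test is performed consisting of $8c_{p_1}\lceil \ln n\rceil+1$ queries to $\mathcal{O}_1$ on $x$; it is passed if the majority report $x$ relevant, otherwise $x$ is discarded and the next element is considered. Then, for $i=1,\dots,\eta$, the $i$-th test consists of $2\lceil 2^i\ln n\rceil c_{p_2}+1$ queries to $\mathcal{O}_2$ on $x$ and is passed if the majority report $x$ relevant; if $x$ fails a test it is discarded and the next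 element is considered. The process returns the first element that passes the $\eta$-th test (if no element does, it returns nothing, which counts as not returning an element of $S^-_{3/4}$). Here $\ln$ is the natural logarithm. *)

(* Defs.v *)
From HB Require Import structures.
From mathcomp Require Import all_boot all_order all_algebra.
From mathcomp Require Import reals exp.
Unset Printing Implicit Defensive.
Import Order.TTheory GRing.Theory Num.Theory.
Local Open Scope ring_scope.

Definition log2 {R : realType} (x : R) : R := ln x / ln 2.

Definition cq {R : realType} (q : R) : nat :=
  `|Num.ceil (4 * (1 - q) / (1 - 2 * q) ^+ 2)|%N.

Definition k_pre {R : realType} (p1 : R) (n : nat) : nat :=
  (8 * cq p1 * `|Num.ceil (ln (n%:R : R))|%N + 1)%N.

Definition k_test {R : realType} (p2 : R) (n i : nat) : nat :=
  (2 * `|Num.ceil (2 ^+ i * ln (n%:R : R))|%N * cq p2 + 1)%N.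

Definition eta {R : realType} (n : nat) : nat :=
  (1 + `|Num.ceil (log2 ((n%:R : R) / log2 (n%:R : R)))|%N)%N.

(* Test number i (0 = preliminary test on O1, i = 1..eta on O2): its length *)
Definition testlen {R : realType} (p1 p2 : R) (n : nat) (i : nat) : nat :=
  if i == 0%N then k_pre p1 n else k_test p2 n i.

Definition Kmax {R : realType} (p1 p2 : R) (n : nat) : nat :=
  \max_(i < (@eta R n).+1) testlen p1 p2 n i.

(* S' = image of the injective s : 'I_m -> T; s j is the j-th element
   considered by the process.  rank of x in S' *)
Definition rank_in {d} {T : orderType d} {m : nat} (s : 'I_m -> T) (x : T) : nat :=
  #|[set j : 'I_m | (s j < x)%O]|.

Definition in_Sminus {R : realType} {d} {T : orderType d} {m : nat}
  (s : 'I_m -> T) (rho : R) (x : T) : bool :=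
  (rank_in s x < `|Num.ceil (rho * m%:R)|)%N.

(* Sample space: all oracle answers.  Answer (j, i, t) is the t-th query of
   test i on the j-th element.  Queries with t >= testlen i are never used. *)
Definition Omega (m E K : nat) := {ffun 'I_m * 'I_E * 'I_K -> bool}.

Definition passes {R : realType} (p1 p2 : R) (n m : nat)
  (w : Omega m (@eta R n).+1 (Kmax p1 p2 n)) (j : 'I_m) (i : 'I_(@eta R n).+1) : bool :=
  (testlen p1 p2 n i <
     2 * #|[set t : 'I_(Kmax p1 p2 n) | (t < testlen p1 p2 n i)%N && w (j, i, t)]|)%N.

Definition passes_all {R : realType} (p1 p2 : R) (n m : nat)
  (w : Omega m (@eta R n).+1 (Kmax p1 p2 n)) (j : 'I_m) : bool :=
  [forall i, passes p1 p2 n m w j i].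

(* the process returns (= first element passing all tests) an element of S^-_{3/4} *)
Definition good_outcome {R : realType} (p1 p2 : R) (n m : nat) d (T : orderType d)
  (s : 'I_m -> T) (w : Omega m (@eta R n).+1 (Kmax p1 p2 n)) : bool :=
  [exists j : 'I_m, [&& passes_all p1 p2 n m w j, in_Sminus s (3 / 4 : R) (s j)
      & [forall l : 'I_m, (l < j)%N ==> ~~ passes_all p1 p2 n m w l]]].

(* probability that a single query of test i on element j says "relevant" *)
Definition bias {R : realType} d (T : orderType d) (m : nat) (s : 'I_m -> T)
  (a1 a2 : T -> R) (j : 'I_m) (i : nat) : R :=
  if i == 0%N then a1 (s j) else a2 (s j).

Definition weight {R : realType} (p1 p2 : R) (n m : nat) d (T : orderType d)
  (s : 'I_m -> T) (a1 a2 : T -> R) (w : Omega m (@eta R n).+1 (Kmax p1 p2 n)) : R :=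
  \prod_(q : 'I_m * 'I_(@eta R n).+1 * 'I_(Kmax p1 p2 n))
     (if w q then bias d T m s a1 a2 q.1.1 q.1.2 else 1 - bias d T m s a1 a2 q.1.1 q.1.2).

Definition success_prob {R : realType} (p1 p2 : R) (n m : nat) d (T : orderType d)
  (s : 'I_m -> T) (a1 a2 : T -> R) : R :=
  \sum_(w : Omega m (@eta R n).+1 (Kmax p1 p2 n) | good_outcome p1 p2 n m d T s w)
     weight p1 p2 n m d T s a1 a2 w.

(* Main.v *)
Require Import Defs.
From HB Require Import structures.
From mathcomp Require Import all_boot all_order all_algebra.
From mathcomp Require Import reals exp sequences.
From mathcomp Require Import lra zify.
Import Order.TTheory GRing.Theory Num.Theory.
Local Open Scope ring_scope.

Lemma sum_ffun_prod {R : realType} {I : finType} (F : I -> bool -> R) :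
  \sum_(w : {ffun I -> bool}) \prod_q F q (w q) = \prod_q (F q true + F q false).
Proof.
rewrite -bigA_distr_bigA; apply: eq_bigr => q _; by rewrite big_bool.
Qed.

Lemma ceil_nat_ge {R : realType} {x : R} : 0 <= x -> x <= (`|Num.ceil x|%N)%:R.
Proof.
move=> x0; rewrite natr_absz ger0_norm ?ceil_ge //.
by rewrite ceil_ge0 (lt_le_trans _ x0) // ltrN10.
Qed.

Lemma ceil_nat_lt {R : realType} {x : R} : 0 <= x -> (`|Num.ceil x|%N)%:R < x + 1.
Proof.
move=> x0; rewrite natr_absz ger0_norm; last first.
  by rewrite ceil_ge0 (lt_le_trans _ x0) // ltrN10.
by rewrite -ltrBlDr -[1]/(1%:~R) -intrB ceilB1_lt.
Qed.

Lemma card_lt_ord {K k : nat} : (k <= K)%N -> #|[set t : 'I_K | (t < k)%N]| = k.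
Proof.
move=> kK; rewrite -sum1_card.
have -> : (\sum_(i in [set t : 'I_K | (t < k)%N]) 1 = \sum_(i < K | (i < k)%N) 1)%N.
  by apply: eq_bigl => i; rewrite inE.
rewrite -(big_ord_widen _ (fun=> 1%N) kK) /=.
by rewrite sum1_card card_ord.
Qed.

Lemma prod_lt_const {R : realType} {K k : nat} (x : R) : (k <= K)%N ->
  \prod_(t : 'I_K) (if (t < k)%N then x else 1) = x ^+ k.
Proof.
move=> kK; rewrite -big_mkcond /=.
rewrite -(big_ord_widen _ (fun=> x) kK) /=.
by rewrite prodr_const card_ord.
Qed.

Lemma prod_split_cnt {R : realType} {K k : nat} (f : 'I_K -> bool) (x y : R) :
  \prod_(t : 'I_K) (if (t < k)%N then (if f t then x else y) else 1) =
  x ^+ #|[set t : 'I_K | (t < k)%N && f t]| * y ^+ #|[set t : 'I_K | (t < k)%N && ~~ f t]|.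
Proof.
rewrite -big_mkcond /= (bigID f) /=.
have -> : \prod_(i < K | (i < k)%N && f i) (if f i then x else y) = \prod_(i in [set t : 'I_K | (t < k)%N && f t]) x.
  by rewrite big_mkcond [RHS]big_mkcond; apply: eq_bigr => i _; rewrite inE; case: (f i); case: (i < k)%N.
have -> : \prod_(i < K | (i < k)%N && ~~ f i) (if f i then x else y) = \prod_(i in [set t : 'I_K | (t < k)%N && ~~ f t]) y.
  by rewrite big_mkcond [RHS]big_mkcond; apply: eq_bigr => i _; rewrite inE; case: (f i); case: (i < k)%N.
by rewrite !prodr_const.
Qed.

Lemma cnt_sum {K k : nat} (f : 'I_K -> bool) : (k <= K)%N ->
  (#|[set t : 'I_K | (t < k)%N && f t]| + #|[set t : 'I_K | (t < k)%N && ~~ f t]|)%N = k.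
Proof.
move=> kK; rewrite -[in RHS](card_lt_ord kK).
rewrite -(cardID [pred t : 'I_K | f t] [set t : 'I_K | (t < k)%N]).
congr (_ + _)%N; apply: eq_card => t; rewrite !inE /=; first by rewrite andbC.
by rewrite andbC.
Qed.

Definition lamq {R : realType} (p : R) : R := 2 - 2 * p.
Definition rhoq {R : realType} (p : R) : R := 1 / 2 + 2 * p - 2 * p ^+ 2.

Section TL.
Variables (R : realType) (p : R).
Hypothesis hp : 0 <= p < 1 / 2.

Lemma lam_ge1 : 1 <= lamq p.
Proof. rewrite /lamq; case/andP: hp => ? ?; lra. Qed.

Lemma lam_gt0 : 0 < lamq p.
Proof. apply: lt_le_trans lam_ge1; exact: ltr01. Qed.

Lemma rho_ge0 : 0 <= rhoq p.
Proof. rewrite /rhoq; case/andP: hp => ? ?; nra. Qed.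

Lemma rho_le1 : rhoq p <= 1.
Proof. rewrite /rhoq; case/andP: hp => ? ?; nra. Qed.

Lemma fail_factor b : 1 - p <= b <= 1 -> b / lamq p + (1 - b) * lamq p <= rhoq p.
Proof.
case/andP => b1 b2; have l0 := lam_gt0; have l1 := lam_ge1.
rewrite -(ler_pM2r l0) mulrDl -mulrA mulVf ?gt_eqF // mulr1.
rewrite /rhoq; move: l0 l1; rewrite /lamq => l0 l1; case/andP: hp => ? ?.
have h1 : 0 <= (2 - 2 * p) * (2 - 2 * p) - 1 by nra.
have h2 : 0 <= b - (1 - p) by lra.
have := mulr_ge0 h1 h2; nra.
Qed.

Lemma pass_factor b : 0 <= b <= p -> b * lamq p + (1 - b) / lamq p <= rhoq p.
Proof.
case/andP => b1 b2; have l0 := lam_gt0; have l1 := lam_ge1.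
rewrite -(ler_pM2r l0) mulrDl -(mulrA (1 - b)) mulVf ?gt_eqF // mulr1.
rewrite /rhoq; move: l0 l1; rewrite /lamq => l0 l1; case/andP: hp => ? ?.
have h1 : 0 <= (2 - 2 * p) * (2 - 2 * p) - 1 by nra.
have h2 : 0 <= p - b by lra.
have := mulr_ge0 h1 h2; nra.
Qed.

Lemma cq_ge : 2 <= (cq p)%:R * (1 - 2 * p) ^+ 2.
Proof.
case/andP: hp => p0 p1.
have e0 : 0 < (1 - 2 * p) ^+ 2 by rewrite exprn_gt0 //; lra.
have h : 0 <= 4 * (1 - p) / (1 - 2 * p) ^+ 2.
  by rewrite divr_ge0 ?ltW //; lra.
have := ceil_nat_ge h; rewrite -/(cq p) => hc.
apply: le_trans (_ : 4 * (1 - p) <= _); first lra.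
rewrite -(ler_pM2r e0) in hc.
by rewrite divfK ?gt_eqF in hc.
Qed.

Lemma rho_pow_bound (k M : nat) : (2 * cq p * M <= k)%N ->
  rhoq p ^+ k <= expR (- (2 * M%:R)).
Proof.
move=> hk.
apply: le_trans (ler_wiXn2l rho_ge0 rho_le1 hk) _.
have hr : rhoq p <= expR (- ((1 - 2 * p) ^+ 2 / 2)).
  apply: le_trans (expR_ge1Dx _); rewrite /rhoq; lra.
apply: le_trans (lerXn2r _ _ _ hr) _; rewrite ?nnegrE ?rho_ge0 ?expR_ge0 //.
rewrite -expRM_natr ler_expR natrM natrM.
have := cq_ge; have : 0 <= (M%:R : R) by [].
move=> M0 c2; nra.
Qed.

End TL.

Section Setting.
Variables (R : realType) (p1 p2 : R) (n m : nat) (d : Order.disp_t) (T : orderType d)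
  (s : 'I_m -> T) (a1 a2 : T -> R).
Hypotheses (Hp1 : 0 <= p1 < 1 / 2) (Hp2 : 0 <= p2 < 1 / 2)
  (Ha1 : forall x, 0 <= a1 x <= 1) (Ha2 : forall x, 0 <= a2 x <= 1).

Local Notation E := (@Defs.eta R n).+1.
Local Notation K := (Kmax p1 p2 n).
Local Notation I := ('I_m * 'I_E * 'I_K)%type.
Local Notation Om := (Omega m E K).

Definition bt (q : I) : R := bias d T m s a1 a2 q.1.1 q.1.2.
Definition wt (w : Om) : R := weight p1 p2 n m d T s a1 a2 w.

Lemma bt01 q : 0 <= bt q <= 1.
Proof. by rewrite /bt /bias; case: ifP. Qed.

Lemma wt_ge0 w : 0 <= wt w.
Proof.
apply: prodr_ge0 => q _; have /andP[h1 h2] := bt01 q.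
rewrite -/(bt q); case: (w q) => //; lra.
Qed.

Lemma expect (g : I -> bool -> R) :
  \sum_(w : Om) wt w * \prod_q g q (w q) =
  \prod_q (bt q * g q true + (1 - bt q) * g q false).
Proof.
transitivity (\sum_(w : Om) \prod_q ((if w q then bt q else 1 - bt q) * g q (w q))).
  by apply: eq_bigr => w _; rewrite /wt /weight -big_split.
rewrite (sum_ffun_prod (fun q b => (if b then bt q else 1 - bt q) * g q b)).
by apply: eq_bigr.
Qed.

Lemma total : \sum_(w : Om) wt w = 1.
Proof.
have := expect (fun _ _ => 1).
rewrite (eq_bigr (fun w => wt w)); last by move=> w _; rewrite big1 ?mulr1.
move=> ->; apply: big1 => q _; by rewrite !mulr1 addrC subrK.
Qed.

Definition pp (i : nat) : R := if i == 0%N then p1 else p2.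
Definition lam (i : nat) : R := lamq (pp i).
Definition kk (i : nat) : nat := testlen p1 p2 n i.

Lemma pp_ok i : 0 <= pp i < 1 / 2.
Proof. by rewrite /pp; case: ifP. Qed.

Lemma kk_le (i : 'I_E) : (kk i <= K)%N.
Proof. rewrite /kk /Kmax; exact: (@leq_bigmax _ (fun i : 'I_E => testlen p1 p2 n i) i). Qed.

Definition hF (i : nat) (t : 'I_K) (b : bool) : R :=
  if (t < kk i)%N then (if b then (lam i)^-1 else lam i) else 1.
Definition hP (i : nat) (t : 'I_K) (b : bool) : R :=
  if (t < kk i)%N then (if b then lam i else (lam i)^-1) else 1.

Lemma hF_ge0 i t b : 0 <= hF i t b.
Proof.
have := lam_gt0 _ _ (pp_ok i); rewrite /hF -/(lam i) => l0.
by case: ifP => //; case: b => //; rewrite ?invr_ge0 ltW.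
Qed.

Lemma hP_ge0 i t b : 0 <= hP i t b.
Proof.
have := lam_gt0 _ _ (pp_ok i); rewrite /hP -/(lam i) => l0.
by case: ifP => //; case: b => //; rewrite ?invr_ge0 ltW.
Qed.

Lemma fail_ind (w : Om) j (i : 'I_E) : ~~ passes p1 p2 n m w j i ->
  1 <= \prod_t hF i t (w (j, i, t)).
Proof.
rewrite /passes -/(kk i) -leqNgt => h.
rewrite /hF (prod_split_cnt (fun t => w (j, i, t))).
have := cnt_sum (fun t => w (j, i, t)) (kk_le i).
set X := #|_|; set Y := #|_| => hXY.
have l1 := lam_ge1 _ _ (pp_ok i); have l0 := lam_gt0 _ _ (pp_ok i); rewrite -/(lam i) in l1 l0.
rewrite exprVn mulrC ler_pdivlMr ?exprn_gt0 // mul1r.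
apply: ler_weXn2l => //; lia.
Qed.

Lemma pass_ind (w : Om) j (i : 'I_E) : passes p1 p2 n m w j i ->
  1 <= \prod_t hP i t (w (j, i, t)).
Proof.
rewrite /passes -/(kk i) => h.
rewrite /hP (prod_split_cnt (fun t => w (j, i, t))).
have := cnt_sum (fun t => w (j, i, t)) (kk_le i).
set X := #|_|; set Y := #|_| => hXY.
have l1 := lam_ge1 _ _ (pp_ok i); have l0 := lam_gt0 _ _ (pp_ok i); rewrite -/(lam i) in l1 l0.
rewrite exprVn ler_pdivlMr ?exprn_gt0 // mul1r.
apply: ler_weXn2l => //; lia.
Qed.

Lemma prod_choice (F : 'I_m -> 'I_E -> 'I_K -> R) (c : {ffun 'I_m -> 'I_E}) :
  \prod_(q : I) (if q.1.2 == c q.1.1 then F q.1.1 q.1.2 q.2 else 1) =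
  \prod_j \prod_t F j (c j) t.
Proof.
rewrite -(pair_bigA _ (fun (x : 'I_m * 'I_E) (t : 'I_K) => if x.2 == c x.1 then F x.1 x.2 t else 1)) /=.
rewrite -(pair_bigA _ (fun (j : 'I_m) (i : 'I_E) => \prod_(t : 'I_K) if i == c j then F j i t else 1)) /=.
apply: eq_bigr => j _.
rewrite (eq_bigr (fun i => if i == c j then \prod_t F j i t else 1)); last first.
  by move=> i _; case: eqP => // _; rewrite big1.
by rewrite -big_mkcond big_pred1_eq.
Qed.

Lemma prod_slice (F : 'I_m -> 'I_E -> 'I_K -> R) j i :
  \prod_(q : I) (if (q.1.1 == j) && (q.1.2 == i) then F q.1.1 q.1.2 q.2 else 1) =
  \prod_t F j i t.
Proof.
rewrite -(pair_bigA _ (fun (x : 'I_m * 'I_E) (t : 'I_K) => if (x.1 == j) && (x.2 == i) then F x.1 x.2 t else 1)) /=.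
rewrite -(pair_bigA _ (fun (j' : 'I_m) (i' : 'I_E) => \prod_(t : 'I_K) if (j' == j) && (i' == i) then F j' i' t else 1)) /=.
rewrite (bigD1 j) //= [X in _ * X]big1 ?mulr1; last first.
  by move=> j' /negbTE hj; apply: big1 => i' _; apply: big1 => t _; rewrite hj.
rewrite eqxx /=.
rewrite (eq_bigr (fun i' => if i' == i then \prod_t F j i' t else 1)); last first.
  by move=> i' _; case: eqP => // _; rewrite big1.
by rewrite -big_mkcond big_pred1_eq.
Qed.

Lemma Efail_bound j (i : 'I_E) : 1 - pp i <= bias d T m s a1 a2 j i ->
  \prod_t (bt (j, i, t) * hF i t true + (1 - bt (j, i, t)) * hF i t false)
    <= rhoq (pp i) ^+ kk i.
Proof.
move=> hb; rewrite -(prod_lt_const (rhoq (pp i)) (kk_le i)).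
apply: ler_prod => t _; rewrite /hF /bt /=.
have /andP[b0 b1] := bt01 (j, i, t); rewrite /bt /= in b0 b1.
have l0 := lam_gt0 _ _ (pp_ok i); rewrite -/(lam i) in l0.
case: ifP => _; last by rewrite !mulr1 addrC subrK lexx ler01.
apply/andP; split.
  have h1 : 0 <= bias d T m s a1 a2 j i / lam i by apply: divr_ge0 => //; exact: ltW.
  have h2 : 0 <= (1 - bias d T m s a1 a2 j i) * lam i by apply: mulr_ge0; [rewrite subr_ge0 | exact: ltW].
  by rewrite addr_ge0.
rewrite /lam; apply: fail_factor; [exact: pp_ok | by rewrite hb b1].
Qed.

Lemma Epass_bound j (i : 'I_E) : bias d T m s a1 a2 j i <= pp i ->
  \prod_t (bt (j, i, t) * hP i t true + (1 - bt (j, i, t)) * hP i t false)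
    <= rhoq (pp i) ^+ kk i.
Proof.
move=> hb; rewrite -(prod_lt_const (rhoq (pp i)) (kk_le i)).
apply: ler_prod => t _; rewrite /hP /bt /=.
have /andP[b0 b1] := bt01 (j, i, t); rewrite /bt /= in b0 b1.
have l0 := lam_gt0 _ _ (pp_ok i); rewrite -/(lam i) in l0.
case: ifP => _; last by rewrite !mulr1 addrC subrK lexx ler01.
apply/andP; split.
  have h1 : 0 <= bias d T m s a1 a2 j i * lam i by apply: mulr_ge0 => //; exact: ltW.
  have h2 : 0 <= (1 - bias d T m s a1 a2 j i) / lam i by apply: divr_ge0; [rewrite subr_ge0 | exact: ltW].
  by rewrite addr_ge0.
rewrite /lam; apply: pass_factor; [exact: pp_ok | by rewrite hb b0].
Qed.

Definition etao : 'I_E := ord_max.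

Definition Gs := [set j : 'I_m | in_Sminus s (1 / 6 : R) (s j)].
Definition Bs := [set j : 'I_m | ~~ in_Sminus s (3 / 4 : R) (s j)].

Lemma bad_cases (w : Om) : ~~ good_outcome p1 p2 n m d T s w ->
  (forall j, j \in Gs -> ~~ passes_all p1 p2 n m w j) \/
  (exists2 j, j \in Bs & passes p1 p2 n m w j etao).
Proof.
move=> hg.
case: (pickP (passes_all p1 p2 n m w)) => [j0 hj0 | none]; last first.
  by left => j _; rewrite none.
right.
case: (arg_minnP (fun j : 'I_m => nat_of_ord j) hj0) => j hj hmin.
exists j; last by move/forallP: hj; apply.
rewrite inE; apply/negP => hin.
move/negP: hg; apply; apply/existsP; exists j; rewrite hj hin /=.
apply/forallP => l; apply/implyP => hl; apply/negP => hpl.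
by have := hmin l hpl; rewrite leqNgt hl.
Qed.

Definition Zf (w : Om) : R :=
  \prod_j (if j \in Gs then \sum_(i : 'I_E) \prod_t hF i t (w (j, i, t)) else 1).
Definition Bf (w : Om) : R :=
  \sum_j (if j \in Bs then \prod_t hP etao t (w (j, etao, t)) else 0).

Lemma ind_bound (w : Om) :
  ((~~ good_outcome p1 p2 n m d T s w)%:R : R) <= Zf w + Bf w.
Proof.
have Z0 : 0 <= Zf w.
  apply: prodr_ge0 => j _; case: ifP => // _; apply: sumr_ge0 => i _.
  apply: prodr_ge0 => t _; exact: hF_ge0.
have B0 : 0 <= Bf w.
  apply: sumr_ge0 => j _; case: ifP => // _; apply: prodr_ge0 => t _; exact: hP_ge0.
case: (boolP (good_outcome p1 p2 n m d T s w)) => hg /=; first by rewrite addr_ge0.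
case: (bad_cases w hg) => [hA | [j hj hp]].
  apply: le_trans (_ : Zf w <= _); last by rewrite lerDl.
  apply: le_trans (_ : \prod_(j : 'I_m) (1 : R) <= _); first by rewrite big1.
  apply: ler_prod => j _; rewrite ler01 /=; case: ifP => hjG //=.
  have := hA j hjG; rewrite /passes_all negb_forall => /existsP [i hi].
  apply: le_trans (fail_ind _ _ _ hi) _.
  rewrite (bigD1 i) //= lerDl; apply: sumr_ge0 => i' _.
  apply: prodr_ge0 => t _; exact: hF_ge0.
apply: le_trans (_ : Bf w <= _); last by rewrite lerDr.
rewrite /Bf (bigD1 j) //= hj; apply: le_trans (pass_ind _ _ _ hp) _; rewrite lerDl.
apply: sumr_ge0 => j' _; case: ifP => // _; apply: prodr_ge0 => t _; exact: hP_ge0.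
Qed.

Hypothesis H1 : forall j, in_Sminus s (1 / 6 : R) (s j) -> 1 - p1 <= a1 (s j).
Hypothesis H3 : forall j, in_Sminus s (1 / 3 : R) (s j) -> 1 - p2 <= a2 (s j).
Hypothesis H4 : forall j, ~~ in_Sminus s (3 / 4 : R) (s j) -> a2 (s j) <= p2.

Lemma etao_neq0 : (nat_of_ord etao == 0%N) = false.
Proof. by rewrite /etao /= /Defs.eta add1n. Qed.

Lemma E_B : \sum_(w : Om) wt w * Bf w <= m%:R * rhoq p2 ^+ kk etao.
Proof.
rewrite /Bf.
under eq_bigr do rewrite mulr_sumr.
rewrite exchange_big /=.
apply: le_trans (_ : \sum_(j : 'I_m) rhoq p2 ^+ kk etao <= _); last first.
  by rewrite sumr_const card_ord mulr_natl.
apply: ler_sum => j _.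
have [hjB|hjB] := boolP (j \in Bs); last first.
  rewrite big1; first by rewrite exprn_ge0 // rho_ge0.
  by move=> w _; rewrite mulr0.
pose g := fun (q : I) (b : bool) =>
  if (q.1.1 == j) && (q.1.2 == etao) then hP q.1.2 q.2 b else 1.
rewrite (eq_bigr (fun w : Om => wt w * \prod_q g q (w q))); last first.
  move=> w _; congr (_ * _).
  rewrite -(prod_slice (fun j' i' t => hP i' t (w (j', i', t)))).
  by apply: eq_bigr => -[[j' i'] t] _.
rewrite (expect g).
rewrite (eq_bigr (fun q : I => if (q.1.1 == j) && (q.1.2 == etao) then
   bt q * hP q.1.2 q.2 true + (1 - bt q) * hP q.1.2 q.2 false else 1)); last first.
  by move=> q _; rewrite /g; case: ifP => // _; rewrite !mulr1 addrC subrK.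
rewrite (prod_slice (fun j' i' t => bt (j', i', t) * hP i' t true + (1 - bt (j', i', t)) * hP i' t false)).
apply: le_trans (Epass_bound j etao _) _; last by rewrite /pp etao_neq0.
rewrite /bias /pp etao_neq0; apply: H4.
by move: hjB; rewrite inE.
Qed.

Lemma absceil_le (x y : R) : 0 <= x <= y -> (`|Num.ceil x| <= `|Num.ceil y|)%N.
Proof.
case/andP=> x0 xy; have y0 := le_trans x0 xy.
have cx : 0 <= Num.ceil x by rewrite ceil_ge0 (lt_le_trans _ x0) // ltrN10.
have cy : 0 <= Num.ceil y by rewrite ceil_ge0 (lt_le_trans _ y0) // ltrN10.
by rewrite -lez_nat !gez0_abs // le_ceil.
Qed.

Lemma Gs_good j : j \in Gs -> forall i : 'I_E, 1 - pp i <= bias d T m s a1 a2 j i.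
Proof.
rewrite inE => hj i; rewrite /pp /bias; case: ifP => _; first exact: H1.
apply: H3; move: hj; rewrite /in_Sminus => /leq_trans; apply.
have h6 : (0 : R) <= 1 / 6 by lra.
apply: absceil_le; rewrite mulr_ge0 ?ler0n //=.
by apply: ler_wpM2r; [rewrite ler0n | lra].
Qed.

Definition Hh (j : 'I_m) (i : 'I_E) (t : 'I_K) (b : bool) : R :=
  if j \in Gs then hF i t b else 1.
Definition cst (j : 'I_m) (i : 'I_E) : R := if j \in Gs then 1 else (i == ord0)%:R.
Definition ee (j : 'I_m) (i : 'I_E) (t : 'I_K) : R :=
  bt (j, i, t) * Hh j i t true + (1 - bt (j, i, t)) * Hh j i t false.

Lemma sum_ind0 : \sum_(i : 'I_E) ((i == ord0)%:R : R) = 1.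
Proof.
rewrite (bigD1 ord0) //= big1 ?addr0 //; by move=> i /negbTE ->.
Qed.

Lemma Zf_eq (w : Om) :
  Zf w = \prod_j \sum_(i : 'I_E) (cst j i * \prod_t Hh j i t (w (j, i, t))).
Proof.
apply: eq_bigr => j _; rewrite /cst /Hh; case: ifP => hj.
  by apply: eq_bigr => i _; rewrite mul1r.
rewrite (eq_bigr (fun i => (i == ord0)%:R)) ?sum_ind0 // => i _; by rewrite big1 ?mulr1.
Qed.

Lemma E_A : \sum_(w : Om) wt w * Zf w <=
  \prod_j (if j \in Gs then \sum_(i : 'I_E) rhoq (pp i) ^+ kk i else 1).
Proof.
rewrite (eq_bigr (fun w : Om => wt w * \prod_j \sum_(i : 'I_E) (cst j i * \prod_t Hh j i t (w (j, i, t))))); last by move=> w _; rewrite Zf_eq.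
under eq_bigr do rewrite bigA_distr_bigA /= mulr_sumr.
rewrite exchange_big /=.
pose Gc := fun (c : {ffun 'I_m -> 'I_E}) (q : I) (b : bool) =>
  if q.1.2 == c q.1.1 then Hh q.1.1 q.1.2 q.2 b else 1.
have step : forall c : {ffun 'I_m -> 'I_E},
  \sum_(w : Om) wt w * \prod_j (cst j (c j) * \prod_t Hh j (c j) t (w (j, c j, t))) =
  \prod_j (cst j (c j) * \prod_t ee j (c j) t).
  move=> c.
  rewrite (eq_bigr (fun w : Om => (\prod_j cst j (c j)) * (wt w * \prod_q Gc c q (w q)))); last first.
    move=> w _; rewrite big_split /= mulrCA; congr (_ * (_ * _)).
    rewrite -(prod_choice (fun j i t => Hh j i t (w (j, i, t))) c).
    by apply: eq_bigr => -[[j' i'] t] _.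
  rewrite -mulr_sumr (expect (Gc c)) big_split /=; congr (_ * _).
  rewrite -(prod_choice ee c); apply: eq_bigr => -[[j' i'] t] _ /=.
  by rewrite /Gc /ee /=; case: ifP => // _; rewrite !mulr1 addrC subrK.
under eq_bigr do rewrite step.
rewrite -(@bigA_distr_bigA _ _ _ _ _ _ _ (fun j i => cst j i * \prod_t ee j i t)) /=.
apply: ler_prod => j _.
have ee0 : forall i t, 0 <= ee j i t.
  move=> i t; rewrite /ee; have /andP[b0 b1] := bt01 (j, i, t).
  rewrite addr_ge0 // mulr_ge0 // ?subr_ge0 // /Hh; case: ifP => // _; exact: hF_ge0.
apply/andP; split.
  apply: sumr_ge0 => i _; rewrite mulr_ge0 ?prodr_ge0 // /cst; case: ifP => // _; exact: ler0n.
rewrite /cst; case: ifP => hj.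
  apply: ler_sum => i _; rewrite mul1r.
  apply: (le_trans _ (Efail_bound j i (Gs_good j hj i))).
  by apply: ler_prod => t _; rewrite ee0 /ee /Hh hj lexx.
have -> : \sum_(i : 'I_E) ((i == ord0)%:R : R) * \prod_t ee j i t = \sum_(i : 'I_E) ((i == ord0)%:R : R).
  apply: eq_bigr => i _; rewrite big1 ?mulr1 // => t _.
  by rewrite /ee /Hh hj !mulr1 addrC subrK.
by rewrite sum_ind0.
Qed.

Lemma one_minus : 1 - success_prob p1 p2 n m d T s a1 a2 =
  \sum_(w : Om) wt w * (~~ good_outcome p1 p2 n m d T s w)%:R.
Proof.
rewrite -[X in X - _]total /wt /success_prob (bigID (good_outcome p1 p2 n m d T s)) /= addrC addrK.
rewrite big_mkcond /=; apply: eq_bigr => w _; by case: ifP; rewrite ?mulr1 ?mulr0.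
Qed.

Lemma bad_bound : 1 - success_prob p1 p2 n m d T s a1 a2 <=
  \prod_j (if j \in Gs then \sum_(i : 'I_E) rhoq (pp i) ^+ kk i else 1) +
  m%:R * rhoq p2 ^+ kk etao.
Proof.
rewrite one_minus; apply: le_trans (_ : \sum_(w : Om) (wt w * Zf w + wt w * Bf w) <= _).
  apply: ler_sum => w _; rewrite -mulrDr; apply: ler_wpM2l; [exact: wt_ge0 | exact: ind_bound].
by rewrite big_split; apply: lerD; [exact: E_A | exact: E_B].
Qed.

Lemma prod_Gs (X : R) : \prod_j (if j \in Gs then X else 1) = X ^+ #|Gs|.
Proof. by rewrite -big_mkcond prodr_const. Qed.

End Setting.

Section Rank.
Variables (d : Order.disp_t) (T : orderType d) (m : nat) (s : 'I_m -> T).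
Hypothesis sinj : injective s.

Definition rk (j : 'I_m) : nat := rank_in s (s j).

Lemma rk_lt j : (rk j < m)%N.
Proof.
rewrite /rk /rank_in.
have : [set l : 'I_m | (s l < s j)%O] \subset [set~ j].
  apply/subsetP => l; rewrite !inE; apply: contraTneq => ->; by rewrite ltxx.
move/subset_leq_card; rewrite cardsC1 card_ord.
have m0 : (0 < m)%N := leq_ltn_trans (leq0n _) (ltn_ord j).
lia.
Qed.

Lemma rk_inj : injective rk.
Proof.
have key : forall j l, (s j < s l)%O -> (rk j < rk l)%N.
  move=> j l hjl; rewrite /rk /rank_in; apply: proper_card.
  apply/properP; split.
    apply/subsetP => x; rewrite !inE => hx; exact: lt_trans hx hjl.
  by exists j; rewrite !inE ?hjl ?ltxx.
move=> j l hjl; apply: sinj; case: (ltgtP (s j) (s l)) => // h.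
  by have := key _ _ h; rewrite hjl ltnn.
by have := key _ _ h; rewrite hjl ltnn.
Qed.

Definition rko (j : 'I_m) : 'I_m := Ordinal (rk_lt j).

Lemma rko_inj : injective rko.
Proof. by move=> j l /(congr1 val) /= /rk_inj. Qed.

Lemma card_Sminus (r : nat) : (r <= m)%N ->
  #|[set j : 'I_m | (rk j < r)%N]| = r.
Proof.
move=> rm; rewrite -[RHS](card_lt_ord rm) -[in RHS](card_preimset _ rko_inj).
by apply: eq_card => j; rewrite !inE.
Qed.

End Rank.

Lemma ln2_ge (R : realType) : 1 / 2 <= ln (2 : R).
Proof.
have h := expR_ge1Dx (- (1 / 2) : R).
have e := expRxMexpNx_1 (1 / 2 : R).
have p := expR_gt0 (1 / 2 : R).
have p' := expR_gt0 (- (1 / 2) : R).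
have : expR (1 / 2 : R) <= 2 by nra.
move=> h2; rewrite -ler_expR lnK ?posrE //.
Qed.

Lemma expR_nat_ln (R : realType) (n : nat) : expR (n%:R * ln (2 : R)) = 2 ^+ n.
Proof. by rewrite expRM_natl lnK // posrE. Qed.

Lemma final_num (R : realType) (n : nat) : (16 <= n)%N ->
  expR (- (n%:R * ln (2 : R) / 2)) + n%:R * expR (- (4 * (n%:R * ln 2))) <=
  expR (- (n%:R / 5) * ln 2).
Proof.
move=> n16; set u := n%:R * ln (2 : R).
have l2 := ln2_ge R.
have n16' : (16 : R) <= n%:R by rewrite (ler_nat R 16 n).
have u8 : 8 <= u by rewrite /u; nra.
have nle : n%:R <= expR u.
  rewrite /u expR_nat_ln -natrX ler_nat; exact/ltnW/ltn_expl.
have e1 : expR (- (u / 2)) = expR (- (n%:R / 5) * ln 2) * expR (- (3 * u / 10)).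
  by rewrite -expRD; congr expR; rewrite /u; lra.
have e2 : expR u * expR (- (4 * u)) = expR (- (n%:R / 5) * ln 2) * expR (- (14 * u / 5)).
  by rewrite -!expRD; congr expR; rewrite /u; lra.
have hX : expR (- (3 * u / 10)) <= 1 / 2.
  rewrite expRN; have := expR_ge1Dx (3 * u / 10); have := expR_gt0 (3 * u / 10).
  move=> h0 h1; rewrite ler_pdivlMr ?expR_gt0 //.
  rewrite ler_pdivrMl //; nra.
have hY : expR (- (14 * u / 5)) <= expR (- (3 * u / 10)) by rewrite ler_expR; lra.
have P0 := expR_gt0 (- (n%:R / 5) * ln (2 : R)).
have Y0 := expR_gt0 (- (14 * u / 5)).
have hn : n%:R * expR (- (4 * u)) <= expR u * expR (- (4 * u)).
  by rewrite ler_wpM2r ?expR_ge0.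
rewrite e1; rewrite e2 in hn; nra.
Qed.

Lemma kk_bound_pos (R : realType) (p1 p2 : R) (n i : nat) :
  0 <= p2 < 1 / 2 -> (1 < n)%N -> (0 < i)%N ->
  rhoq p2 ^+ kk R p1 p2 n i <= expR (- (2 * (2 ^+ i * ln (n%:R : R)))).
Proof.
move=> hp2 n1 i0.
have Ln0 : 0 <= ln (n%:R : R) by apply: ln_ge0; rewrite ler1n; lia.
have h0 : 0 <= 2 ^+ i * ln (n%:R : R) by rewrite mulr_ge0 ?exprn_ge0.
rewrite /kk /testlen.
have /negbTE -> : i != 0%N by rewrite -lt0n.
apply: le_trans (rho_pow_bound _ _ hp2 _ (`|Num.ceil (2 ^+ i * ln (n%:R : R))|%N) _) _.
  rewrite /k_test; lia.
rewrite ler_expR lerN2 ler_pM2l //; exact: ceil_nat_ge h0.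
Qed.

Lemma kk_bound_all (R : realType) (p1 p2 : R) (n i : nat) :
  0 <= p1 < 1 / 2 -> 0 <= p2 < 1 / 2 -> (1 < n)%N ->
  rhoq (pp R p1 p2 i) ^+ kk R p1 p2 n i <= expR (- (4 * ln (n%:R : R))).
Proof.
move=> hp1 hp2 n1.
have Ln0 : 0 <= ln (n%:R : R) by apply: ln_ge0; rewrite ler1n; lia.
case: (posnP i) => [->|i0].
  rewrite /pp /kk /testlen /=.
  apply: le_trans (rho_pow_bound _ _ hp1 _ (4 * `|Num.ceil (ln (n%:R : R))|)%N _) _.
    rewrite /k_pre; lia.
  rewrite ler_expR lerN2 natrM.
  have := ceil_nat_ge Ln0; lra.
have -> : pp R p1 p2 i = p2 by rewrite /pp; have /negbTE -> : i != 0%N by rewrite -lt0n.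
apply: le_trans (kk_bound_pos _ p1 _ _ _ hp2 n1 i0) _.
rewrite ler_expR lerN2.
have : (2 : R) <= 2 ^+ i by rewrite -[X in X <= _]expr1; apply: ler_weXn2l => //; lra.
nra.
Qed.

Lemma nat_pow_aux (k : nat) : (2 * (k + 5) <= 2 ^ (k + 4))%N.
Proof.
elim: k => [|k IH] //.
rewrite !addSn expnS; lia.
Qed.

Lemma K_le_n (K n : nat) : (5 <= n)%N -> (2 ^ K < 2 * n)%N -> (K + 2 <= n)%N.
Proof.
move=> n5 h; rewrite leqNgt; apply/negP => hn.
have : (2 ^ (n - 5 + 4) <= 2 ^ K)%N by rewrite leq_exp2l //; lia.
have := nat_pow_aux (n - 5); have -> : (n - 5 + 5 = n)%N by lia.
lia.
Qed.

Theorem lemma16 (R : realType) (p1 p2 : R) :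
  0 <= p1 < 1 / 2 -> 0 <= p2 < 1 / 2 ->
  exists N : nat, forall n : nat, (N <= n)%N ->
  forall m : nat, (m%:R : R) = n%:R / log2 (n%:R : R) ->
  forall (d : Order.disp_t) (T : orderType d) (s : 'I_m -> T), injective s ->
  forall a1 a2 : T -> R,
    (forall x, 0 <= a1 x <= 1) -> (forall x, 0 <= a2 x <= 1) ->
    (forall j, in_Sminus s (1 / 6 : R) (s j) -> 1 - p1 <= a1 (s j)) ->
    (forall j, ~~ in_Sminus s (1 / 3 : R) (s j) -> a1 (s j) <= p1) ->
    (forall j, in_Sminus s (1 / 3 : R) (s j) -> 1 - p2 <= a2 (s j)) ->
    (forall j, ~~ in_Sminus s (3 / 4 : R) (s j) -> a2 (s j) <= p2) ->
    1 - powR 2 (- (n%:R / 5)) <= success_prob p1 p2 n m d T s a1 a2.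
Proof.
move=> hp1 hp2; exists 16%N => n hn m hm d T s sinj a1 a2 Ha1 Ha2 H1 H2 H3 H4.
have n1 : (1 < n)%N by lia.
set Ln := ln (n%:R : R).
have n0 : (0 : R) < n%:R by rewrite ltr0n; lia.
have l2 := ln2_ge R.
have l2p : 0 < ln (2 : R) by lra.
have l2L : ln (2 : R) <= Ln by rewrite /Ln ler_ln ?posrE // ?ler_nat //; lia.
have Lp : 0 < Ln by lra.
have hmL : m%:R * Ln = n%:R * ln 2.
  by rewrite hm /log2 -/Ln invf_div mulrA divfK // gt_eqF.
have m_pos : (0 : R) < m%:R.
  have : (0 : R) <= m%:R by [].
  have : 0 < n%:R * ln (2 : R) by rewrite mulr_gt0.
  nra.
have m1 : (0 < m)%N by rewrite -(ltr0n R).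
have mn : (m <= n)%N by rewrite -(ler_nat R); nra.
set K := `|Num.ceil (log2 (m%:R : R))|%N.
have etaE : @Defs.eta R n = (1 + K)%N by rewrite /Defs.eta -hm.
have lm0 : 0 <= log2 (m%:R : R).
  by rewrite /log2 divr_ge0 ?ln_ge0 ?ler1n // ltW.
have hK1 : (m%:R : R) <= 2 ^+ K.
  have := ceil_nat_ge lm0; rewrite -/K /log2 => h.
  rewrite ler_pdivrMr // in h.
  rewrite -expR_nat_ln -[X in X <= _](@lnK R m%:R) ?posrE // ler_expR.
  by [].
have hK2 : 2 ^+ K < 2 * (m%:R : R).
  have := ceil_nat_lt lm0; rewrite -/K /log2 => h.
  rewrite -(ltr_pM2r l2p) mulrDl mul1r divfK ?gt_eqF // in h.
  have -> : 2 * (m%:R : R) = expR (ln 2 + ln m%:R) by rewrite expRD !lnK ?posrE.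
  by rewrite -expR_nat_ln ltr_expR addrC.
have hK1n : (m <= 2 ^ K)%N by rewrite -(ler_nat R) natrX.
have hK2n : (2 ^ K < 2 * m)%N by rewrite -(ltr_nat R) natrX natrM.
have hKn : (K + 2 <= n)%N by apply: K_le_n; clear -hn hK2n mn; lia.
have BB := bad_bound R p1 p2 n m d T s a1 a2 hp1 hp2 Ha1 Ha2 H1 H3 H4.
rewrite prod_Gs in BB.
set δ := \sum_(i < (@Defs.eta R n).+1) rhoq (pp R p1 p2 i) ^+ kk R p1 p2 n i in BB.
have δ0 : 0 <= δ.
  apply: sumr_ge0 => i _; apply: exprn_ge0; apply: rho_ge0; rewrite /pp; case: ifP => //.
have δle : δ <= expR (- (3 * Ln)).
  apply: le_trans (_ : \sum_(i < (@Defs.eta R n).+1) expR (- (4 * Ln)) <= _).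
    by apply: ler_sum => i _; apply: kk_bound_all.
  rewrite sumr_const card_ord etaE.
  apply: le_trans (_ : n%:R * expR (- (4 * Ln)) <= _).
    rewrite -(mulr_natl (expR _) (1 + K).+1); apply: ler_wpM2r; first exact: expR_ge0.
    rewrite ler_nat; clear -hKn; lia.
  rewrite [X in X * _](_ : _ = expR Ln); last by rewrite /Ln lnK ?posrE.
  rewrite -expRD ler_expR; clear -Lp; lra.
set r := `|Num.ceil (1 / 6 * (m%:R : R))|%N.
have x0 : (0 : R) <= 1 / 6 * m%:R by rewrite mulr_ge0 // divr_ge0.
have rge : 1 / 6 * m%:R <= (r%:R : R) := ceil_nat_ge x0.
have rle : (r <= m)%N.
  have := ceil_nat_lt x0; rewrite -/r => h.
  rewrite -ltnS -(ltr_nat R) -natr1; clear -h x0; lra.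
have cardG : #|Gs R m d T s| = r.
  rewrite -(card_Sminus d T m s sinj r rle).
  by apply: eq_card => j; rewrite !inE.
have hA : δ ^+ #|Gs R m d T s| <= expR (- (n%:R * ln 2 / 2)).
  rewrite cardG.
  apply: le_trans (_ : expR (- (3 * Ln)) ^+ r <= _).
    by apply: lerXn2r; rewrite ?nnegrE ?expR_ge0.
  rewrite -expRM_natl ler_expR.
  have hr : 0 <= r%:R - 1 / 6 * (m%:R : R) by rewrite subr_ge0.
  have := mulr_ge0 (ltW Lp) hr.
  clear -hmL Lp; nra.
have hB : m%:R * rhoq p2 ^+ kk R p1 p2 n (etao R n) <= n%:R * expR (- (4 * (n%:R * ln 2))).
  have ev : forall N, nat_of_ord (@ord_max N) = N by [].
  have e0 : (0 < etao R n)%N by rewrite /etao ev etaE.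
  have hk := kk_bound_pos R p1 p2 n (etao R n) hp2 n1 e0.
  apply: le_trans (_ : m%:R * expR (- (2 * (2 ^+ (etao R n) * Ln))) <= _).
    by rewrite ler_wpM2l.
  apply: ler_pM; rewrite ?ler0n ?expR_ge0 ?ler_nat //.
  have e : (2 : R) ^+ etao R n = 2 * 2 ^+ K.
    rewrite /etao ev etaE add1n exprS.
    done.
  rewrite ler_expR e -hmL lerN2.
  have -> : 2 * (2 * 2 ^+ K * Ln) = 4 * (2 ^+ K * Ln) by rewrite -mulrA mulrA -natrM.
  by rewrite ler_pM2l // ler_pM2r.
have F := final_num R n hn.
have h20 : ((2 : R) == 0) = false by rewrite pnatr_eq0.
rewrite /powR h20.
have : 1 - success_prob p1 p2 n m d T s a1 a2 <= expR (- (n%:R / 5) * ln 2).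
  apply: le_trans BB _; apply: le_trans F; exact: lerD.
move=> h; clear -h; lra.
Qed.
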